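(* Let $S$ be a finite set, $f:S\to\mathbb{R}$ a fitness function to be maximized, $S_{\mathrm{opt}}$ the set of maximizers of $f$ and $S_{\mathrm{non}}=S\setminus S_{\mathrm{opt}}$ (assumed nonempty). Let $s1,\dots,s\kappa$ be mutation operators on $S$ that are mutually complementary on $f$, i.e., writing $\rho_{\min}=\min\{\rho(\mathbf{T}_{s1}),\dots,\rho(\mathbf{T}_{s\kappa})\}$: for every $x\in S_{\mathrm{non}}$ and every $sl\in\{s1,\dots,s\kappa\}$ with $P_{sl}(x,x)\ge\rho_{\min}$, there exists $sk\neq sl$ with $P_{sk}(x,x)<\rho_{\min}$. Then there exists a strategy probability distribution $\mathbf{q}$ over $\{s1,\dots,s\kappa\}$ such that the homogeneous mixed strategy (1+1) EA with distribution $\mathbf{q}$ satisfies, for every $k=1,\dots,\kappa$, $R(\mathbf{T}_{\mathbf{q}})>R(\mathbf{T}_{sk})$ and $T(\mathbf{T}_{\mathbf{q}})<T(\mathbf{T}_{sk})$; i.e. its asymptotic convergence rate is larger and its asymptotic hitting time is shorter than those of any pure strategy EA using one of these mutation operators.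
   Context: A mutation operator $s$ on the finite set $S$ is a stochastic matrix $\mathbf{P}_{m,s}=[P_{m,s}(x,y)]_{x,y\in S}$ (probability that mutating $x$ yields $y$). Strict elitist selection between parent $x$ and offspring $y$ keeps $y$ if $f(y)>f(x)$ and keeps $x$ otherwise. The pure strategy (1+1) EA EA($s$) repeatedly mutates the current individual by $s$ and applies strict elitist selection; it is a homogeneous Markov chain on $S$ with transition probabilities $P_s(x,y)=P_{m,s}(x,y)$ if $f(y)>f(x)$, $P_s(x,y)=0$ if $y\neq x$ and $f(y)\le f(x)$, and $P_s(x,x)=1-\sum_{y:\,f(y)>f(x)}P_{m,s}(x,y)$. A (state-dependent) strategy probability distribution over operators $s1,\dots,s\kappa$ is a map $x\mapsto \mathbf{q}(x)=(q_{s1}(x),\dots,q_{s\kappa}(x))$ with $q_{sk}(x)\in[0,1]$ and $\sum_k q_{sk}(x)=1$. The homogeneous mixed strategy (1+1) EA with distribution $\mathbf{q}$ at each generation, with current individual $x$, chooses operator $sk$ with probability $q_{sk}(x)$, mutates $x$ by it, and applies strict elitist selection; its transition matrix is $P_{\mathbf{q}}(x,y)=\sum_{k}q_{sk}(x)P_{sk}(x,y)$. For such an EA with transition matrix $\mathbf{P}$, let $\mathbf{T}$ denote the submatrix $[P(x,y)]_{x,y\in S_{\mathrm{non}}}$ and $\rho(\mathbf{T})$ its spectral radius. The asymptotic convergence rate is $R(\mathbf{T})=-\ln\rho(\mathbf{T})$ (with $-\ln 0=+\infty$). The asymptotic hitting time is $T(\mathbf{T})=\rho((\mathbf{I}-\mathbf{T})^{-1})$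 if $\rho(\mathbf{T})<1$ and $T(\mathbf{T})=+\infty$ if $\rho(\mathbf{T})=1$. Subscripts $\mathbf{q}$ and $sk$ indicate the matrices of the mixed strategy EA and of the pure strategy EA($sk$), respectively. *)

(* Defs.v *)
From HB Require Import structures.
From mathcomp Require Import all_boot all_order all_algebra.
From mathcomp Require Import complex.
From mathcomp Require Import classical_sets reals constructive_ereal exp.
Set Implicit Arguments. Unset Strict Implicit. Unset Printing Implicit Defensive.
Import Order.TTheory GRing.Theory Num.Theory.
Local Open Scope ring_scope.

Section EA.
Variable R : realType.

Definition spectral_radius (n : nat) (A : 'M[R]_n) : R :=
  sup [set r : R | exists l : R[i],
        eigenvalue (map_mx (fun x : R => x%:C%C) A) l /\ r = ComplexField.Normc.normc l].

Variable S : finType.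
Variable f : S -> R.

Definition S_opt : {set S} := [set x | [forall y, f y <= f x]].
Definition S_non : {set S} := ~: S_opt.

(* a mutation operator: a stochastic matrix on S *)
Definition stochastic (Pm : S -> S -> R) :=
  (forall x y, 0 <= Pm x y) /\ (forall x, \sum_y Pm x y = 1).

(* transition probabilities of the pure strategy (1+1) EA with strict elitist selection *)
Definition ea_trans (Pm : S -> S -> R) (x y : S) : R :=
  if f x < f y then Pm x y
  else if y == x then 1 - \sum_(z | f x < f z) Pm x z else 0.

Definition strategy_dist (kappa : nat) (q : S -> 'I_kappa -> R) :=
  (forall x k, 0 <= q x k <= 1) /\ (forall x, \sum_k q x k = 1).

Definition mixed_trans (kappa : nat) (q : S -> 'I_kappa -> R)
  (P : 'I_kappa -> S -> S -> R) (x y : S) : R :=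
  \sum_k q x k * P k x y.

Definition Tsub (P : S -> S -> R) : 'M[R]_#|S_non| :=
  \matrix_(i, j) P (enum_val i) (enum_val j).

Definition conv_rate (n : nat) (T : 'M[R]_n) : \bar R :=
  if spectral_radius T == 0 then +oo%E else (- ln (spectral_radius T))%:E.

Definition hit_time (n : nat) (T : 'M[R]_n) : \bar R :=
  if spectral_radius T < 1 then (spectral_radius (invmx (1%:M - T)))%:E
  else +oo%E.

End EA.

(* Main.v *)
Require Import Defs.
From HB Require Import structures.
From mathcomp Require Import all_boot all_order all_algebra.
From mathcomp Require Import complex.
From mathcomp Require Import classical_sets reals constructive_ereal exp.
From mathcomp Require Import boolp lra.
Import Order.TTheory GRing.Theory Num.Theory.
Local Open Scope ring_scope.

Lemma unit_of_noeig (F : fieldType) n (B : 'M[F]_n) : ~~ eigenvalue B 1 -> (1%:M - B) \in unitmx.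
Proof.
rewrite /eigenvalue /eigenspace negbK kermx_eq0 row_free_unit => h.
by rewrite -opprB /row_free -row_free_unit /row_free (eqmx_opp (B - 1%:M)) -/(row_free _) row_free_unit.
Qed.

Lemma inv_eig (F : fieldType) n (B : 'M[F]_n) mu : (1%:M - B) \in unitmx ->
  eigenvalue (invmx (1%:M - B)) mu -> exists2 l, eigenvalue B l & mu = (1 - l)^-1.
Proof.
move=> U /eigenvalueP [v vA v0].
have e1 : v = mu *: (v - v *m B).
  by rewrite -{1}(mulmx1 v) -(mulVmx U) mulmxA vA -scalemxAl mulmxBr mulmx1.
have mu0 : mu != 0 by apply: contra v0 => /eqP m0; rewrite {1}e1 m0 scale0r.
exists (1 - mu^-1); last by rewrite opprB addrC subrK invrK.
apply/eigenvalueP; exists v => //.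
rewrite scalerBl scale1r; apply/eqP; rewrite eq_sym subr_eq addrC -subr_eq.
by rewrite [X in _ == _ *: X]e1 scalerA mulVf // scale1r.
Qed.

Lemma inv_eig2 (F : fieldType) n (B : 'M[F]_n) l : (1%:M - B) \in unitmx ->
  eigenvalue B l -> eigenvalue (invmx (1%:M - B)) (1 - l)^-1.
Proof.
move=> U /eigenvalueP [v vA v0].
have e1 : v *m (1%:M - B) = (1 - l) *: v by rewrite mulmxBr mulmx1 vA scalerBl scale1r.
have e2 : v = (1 - l) *: (v *m invmx (1%:M - B)).
  by rewrite scalemxAl -e1 -mulmxA mulmxV // mulmx1.
have l1 : 1 - l != 0 by apply: contra v0 => /eqP l1; rewrite e2 l1 scale0r.
apply/eigenvalueP; exists v => //.
by rewrite {2}e2 scalerA mulVf // scale1r.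
Qed.

Lemma normcR (R : realType) (x : R) : ComplexField.Normc.normc (x%:C)%C = `|x|.
Proof. by rewrite /= expr0n /= addr0 sqrtr_sqr. Qed.

Lemma tri_eig (R : realType) n (g : 'I_n -> R) (A : 'M[R]_n) :
  (forall i j, i != j -> A i j != 0 -> g i < g j) ->
  forall l, eigenvalue (map_mx (fun x : R => x%:C%C) A) l -> exists i, l = (A i i)%:C%C.
Proof.
move=> tri l /eigenvalueP [v vA v0].
have [i0 vi0] : exists i, v 0 i != 0.
  case: (pickP (fun i => v 0 i != 0)) => [i vi|h]; first by exists i.
  case/eqP: v0; apply/rowP=> i; rewrite mxE; apply/eqP; exact: negbFE (h i).
case: (@arg_minP _ _ _ i0 (fun j => v 0 j != 0) g vi0) => j vj jmin.
exists j.
have := congr1 (fun M : 'rV__ => M 0 j) vA; rewrite !mxE (bigD1 j) //= big1 ?addr0.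
  rewrite mxE => e; apply: (mulIf vj); by rewrite -e mulrC.
move=> k kj; have [->|vk] := eqVneq (v 0 k) 0; first by rewrite mul0r.
have Akj : A k j = 0.
  apply/eqP; apply: contraT => h; have := tri k j kj h.
  by rewrite ltNge jmin.
by rewrite mxE Akj mulr0.
Qed.

Section SR.
Variables (R : realType) (n : nat) (M : 'M[R]_n) (c : 'I_n -> R).
Hypothesis heig : forall l, eigenvalue (map_mx (fun x : R => x%:C%C) M) l -> exists i, l = (c i)%:C%C.

Local Open Scope classical_set_scope.
Let E := [set r : R | exists l : R[i],
        eigenvalue (map_mx (fun x : R => x%:C%C) M) l /\ r = ComplexField.Normc.normc l].

Local Close Scope classical_set_scope.
Let hub : has_ubound E.
Proof.
exists (\sum_i `|c i|) => r [l [el ->]]; have [i ->] := heig _ el.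
by rewrite normcR (bigD1 i) //= lerDl sumr_ge0.
Qed.

Lemma sr_ub l : eigenvalue (map_mx (fun x : R => x%:C%C) M) l ->
  ComplexField.Normc.normc l <= spectral_radius M.
Proof. by move=> el; apply: (ub_le_sup hub); exists l. Qed.

Lemma sr_le b : (forall i, eigenvalue (map_mx (fun x : R => x%:C%C) M) (c i)%:C%C -> `|c i| <= b) ->
  0 <= b -> spectral_radius M <= b.
Proof.
move=> hb b0; rewrite /spectral_radius -/E.
have [ne|e] := pselect (E !=set0)%classic; last first.
  by rewrite sup_out; [exact: b0 | case].
apply: (ge_sup ne) => r [l [el ->]]; have [i li] := heig _ el.
subst l; rewrite normcR; exact: hb.
Qed.

Lemma sr_ge0 : 0 <= spectral_radius M.
Proof.
rewrite /spectral_radius -/E.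
have [[r Er]|e] := pselect (E !=set0)%classic; last first.
  by rewrite sup_out; [exact: lexx | case].
apply: le_trans (ub_le_sup hub Er).
case: Er => l [el ->]; have [i li] := heig _ el; subst l; rewrite normcR; exact: normr_ge0.
Qed.

Lemma sr_gt b : 0 <= b -> b < spectral_radius M ->
  exists2 i, eigenvalue (map_mx (fun x : R => x%:C%C) M) (c i)%:C%C & b < `|c i|.
Proof.
move=> b0; rewrite /spectral_radius -/E.
have [ne|e] := pselect (E !=set0)%classic; last first.
  by rewrite sup_out; [rewrite ltNge b0 | case].
move=> /(sup_gt ne) [r [l [el ->]] br]; have [i li] := heig _ el; subst l.
exists i; first exact: el.
by rewrite -normcR.
Qed.
End SR.

Section Tri.
Variable R : realType.
Local Notation C := (fun x : R => x%:C%C).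

Lemma map_inv1 n (T : 'M[R]_n) :
  map_mx C (invmx (1%:M - T)) = invmx (1%:M - map_mx C T).
Proof. by rewrite map_invmx map_mxB map_mx1. Qed.

Lemma invC (d : R) : ((1 - d%:C)^-1 = ((1 - d)^-1)%:C)%C.
Proof. by rewrite fmorphV rmorphB rmorph1. Qed.

Lemma tri_inv_eig n (g : 'I_n -> R) (T : 'M[R]_n) :
  (forall i j, i != j -> T i j != 0 -> g i < g j) ->
  (1%:M - T) \in unitmx ->
  forall mu, eigenvalue (map_mx C (invmx (1%:M - T))) mu ->
  exists i, mu = ((1 - T i i)^-1)%:C%C.
Proof.
move=> tri U mu; rewrite map_inv1 => /inv_eig.
have U' : (1%:M - map_mx C T) \in unitmx by move: U; rewrite -(map_unitmx (real_complex R)) map_mxB map_mx1.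
case/(_ U') => l /(@tri_eig _ _ _ _ tri) [i ->] ->; exists i; exact: invC.
Qed.

Lemma inv_eig_map n (T : 'M[R]_n) d :
  (1%:M - T) \in unitmx -> eigenvalue (map_mx C T) d%:C%C ->
  eigenvalue (map_mx C (invmx (1%:M - T))) ((1 - d)^-1)%:C%C.
Proof.
move=> U e; rewrite map_inv1 -invC; apply: inv_eig2 => //.
by move: U; rewrite -(map_unitmx (real_complex R)) map_mxB map_mx1.
Qed.
End Tri.

Lemma unit_R (R : realType) n (T : 'M[R]_n) :
  ~~ eigenvalue (map_mx (fun x : R => x%:C%C) T) 1 -> (1%:M - T) \in unitmx.
Proof.
move=> h; rewrite -(map_unitmx (real_complex R)) map_mxB map_mx1; exact: unit_of_noeig.
Qed.

Section Main.
Variables (R : realType) (S : finType) (f : S -> R).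

Lemma ea_diag (Pm : S -> S -> R) : stochastic Pm -> forall x, 0 <= ea_trans f Pm x x <= 1.
Proof.
move=> [h0 h1] x; rewrite /ea_trans ltxx eqxx.
have := h1 x; rewrite (bigID (fun z => f x < f z)) /= => e.
have a0 : 0 <= \sum_(z | f x < f z) Pm x z by apply: sumr_ge0.
have b0 : 0 <= \sum_(z | ~~ (f x < f z)) Pm x z by apply: sumr_ge0.
apply/andP; split; lra.
Qed.

Lemma ea_tri (Pm : S -> S -> R) x y : y != x -> ea_trans f Pm x y != 0 -> f x < f y.
Proof. by rewrite /ea_trans => yx; case: ifP => // _; rewrite (negbTE yx) eqxx. Qed.

Lemma Tsub_tri (P : S -> S -> R) : (forall x y, y != x -> P x y != 0 -> f x < f y) ->
  forall i j, i != j -> Tsub f P i j != 0 -> f (enum_val i) < f (enum_val j).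
Proof.
move=> h i j ij; rewrite mxE; apply: h; apply: contra ij => /eqP e.
by apply/eqP; apply: enum_val_inj.
Qed.
End Main.

Lemma conv_lt (R : realType) n m (A : 'M[R]_n) (B : 'M[R]_m) :
  0 <= spectral_radius B -> spectral_radius B < spectral_radius A ->
  (conv_rate A < conv_rate B)%E.
Proof.
move=> b0 ba.
have a0 : 0 < spectral_radius A by apply: le_lt_trans b0 ba.
rewrite /conv_rate (negbTE (lt0r_neq0 a0)).
case: eqP => [_|nq]; first exact: ltry.
have q0 : 0 < spectral_radius B by rewrite lt_neqAle eq_sym b0 andbT; apply/eqP.
by rewrite lte_fin ltrN2 ltr_ln ?posrE.
Qed.

Lemma hit_lt (R : realType) n m (A : 'M[R]_n) (B : 'M[R]_m) :
  spectral_radius B < 1 ->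
  (spectral_radius A < 1 ->
     spectral_radius (invmx (1%:M - B)) < spectral_radius (invmx (1%:M - A))) ->
  (hit_time B < hit_time A)%E.
Proof.
move=> b1 h; rewrite /hit_time b1.
case: (ltP (spectral_radius A) 1) => hk; last exact: ltry.
by rewrite lte_fin; apply: h.
Qed.

Lemma inv_le (R : realType) (a D : R) : 0 <= a -> a <= D -> D < 1 -> `|(1 - a)^-1| <= (1 - D)^-1.
Proof.
move=> a0 aD D1.
have p1 : 0 < 1 - D by rewrite subr_gt0.
have p2 : 0 < 1 - a by rewrite subr_gt0; apply: le_lt_trans aD D1.
rewrite ger0_norm; last by rewrite invr_ge0 ltW.
by rewrite lef_pV2 ?posrE // lerD2l lerN2.
Qed.

Lemma inv_lt (R : realType) (d D : R) : 0 <= D -> D < d -> d < 1 -> (1 - D)^-1 < (1 - d)^-1.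
Proof.
move=> D0 Dd d1.
have p1 : 0 < 1 - d by rewrite subr_gt0.
have p2 : 0 < 1 - D by rewrite subr_gt0; apply: lt_trans Dd d1.
by rewrite ltf_pV2 ?posrE // ltrD2l ltrN2.
Qed.

Theorem theorem4 (R : realType) (S : finType) (f : S -> R) (kappa : nat)
  (Pm : 'I_kappa.+1 -> S -> S -> R) :
  S_non f != finset.set0 ->
  (forall k, stochastic (Pm k)) ->
  (let rho_min := \big[Num.min/spectral_radius (Tsub f (ea_trans f (Pm ord0)))]_k
                    spectral_radius (Tsub f (ea_trans f (Pm k))) in
   forall x, x \in S_non f -> forall l,
     rho_min <= ea_trans f (Pm l) x x ->
     exists2 k, k != l & ea_trans f (Pm k) x x < rho_min) ->
  exists q : S -> 'I_kappa.+1 -> R,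
    strategy_dist q /\
    forall k,
      (conv_rate (Tsub f (ea_trans f (Pm k))) <
         conv_rate (Tsub f (mixed_trans q (fun k => ea_trans f (Pm k)))))%E /\
      (hit_time (Tsub f (mixed_trans q (fun k => ea_trans f (Pm k)))) <
         hit_time (Tsub f (ea_trans f (Pm k))))%E.
Proof.
move=> hne hst hyp; rewrite /= in hyp.
set rmin := \big[Num.min/_]_k _ in hyp.
pose P k := ea_trans f (Pm k).
pose ks x := [arg min_(k < ord0) P k x x]%O.
have kmin : forall x k, P (ks x) x x <= P k x x.
  by move=> x k; rewrite /ks; case: arg_minP => // j _ hj; apply: hj.
have rk : forall k, rmin <= spectral_radius (Tsub f (P k)).
  by move=> k; rewrite /rmin; apply: bigmin_le.
have hks : forall x, x \in S_non f -> P (ks x) x x < rmin.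
  move=> x hx; rewrite ltNge; apply/negP => h; have [k _ hk] := hyp x hx (ks x) h.
  by have := lt_le_trans (lt_le_trans hk h) (kmin x k); rewrite ltxx.
pose Q x y := P (ks x) x y.
pose Tq := Tsub f Q.
have tri_k : forall k, forall i j, i != j -> Tsub f (P k) i j != 0 ->
    f (enum_val i) < f (enum_val j).
  by move=> k; apply: Tsub_tri => x y; apply: ea_tri.
have tri_q : forall i j, i != j -> Tq i j != 0 -> f (enum_val i) < f (enum_val j).
  by apply: Tsub_tri => x y; apply: ea_tri.
have dk : forall k i, 0 <= Tsub f (P k) i i <= 1.
  by move=> k i; rewrite mxE; apply: ea_diag.
have dq : forall i, 0 <= Tq i i <= 1.
  by move=> i; rewrite mxE; apply: ea_diag.
have heig_k := fun k => @tri_eig _ _ _ _ (tri_k k).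
have heig_q := @tri_eig _ _ _ _ tri_q.
have srk1 : forall k, spectral_radius (Tsub f (P k)) <= 1.
  move=> k; apply: (@sr_le _ _ _ (fun i => Tsub f (P k) i i) (heig_k k)) => [i _|]; last exact: ler01.
  by have /andP[h1 h2] := dk k i; rewrite ger0_norm.
have [x0 hx0] : exists x, x \in S_non f by apply/set0Pn.
pose i0 := enum_rank_in hx0 x0.
pose im := [arg max_(i > i0) Tq i i]%O.
have Dmax : forall i, Tq i i <= Tq im im.
  by move=> i; rewrite /im; case: arg_maxP => // j _ hj; apply: hj.
pose D := Tq im im.
have hD : D < rmin by rewrite /D /Tq mxE; apply: hks; apply: enum_valP.
have D0 : 0 <= D by have /andP[] := dq im.
have srq : spectral_radius Tq <= D.
  apply: (@sr_le _ _ _ (fun i => Tq i i) heig_q) => [i _|]; last exact: D0.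
  by have /andP[h1 h2] := dq i; rewrite ger0_norm //; apply: Dmax.
have srq0 : 0 <= spectral_radius Tq := @sr_ge0 _ _ _ (fun i => Tq i i) heig_q.
have lt_k : forall k, D < spectral_radius (Tsub f (P k)).
  by move=> k; apply: lt_le_trans hD (rk k).
have D1 : D < 1 by apply: lt_le_trans (lt_k ord0) (srk1 ord0).
have qlt1 : spectral_radius Tq < 1 by apply: le_lt_trans srq D1.
have noeig : forall n (T : 'M[R]_n) (c : 'I_n -> R)
    (heig : forall l, eigenvalue (map_mx (fun x : R => x%:C%C) T) l -> exists i, l = (c i)%:C%C),
    spectral_radius T < 1 -> (1%:M - T) \in unitmx.
  move=> n T c heig lt1; apply: unit_R; apply/negP => e.
  have := @sr_ub _ _ _ c heig _ e; rewrite ComplexField.Normc.normc1 => h.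
  by have := le_lt_trans h lt1; rewrite ltxx.
have mixE : mixed_trans (fun x k => (k == ks x)%:R) (fun k => ea_trans f (Pm k)) = Q.
  apply/funext => x; apply/funext => y.
  rewrite /mixed_trans (bigD1 (ks x)) //= eqxx mul1r big1 ?addr0 // => k /negbTE ->.
  by rewrite mul0r.
exists (fun x k => (k == ks x)%:R); split.
  split => x.
    by move=> k; case: (k == ks x); rewrite /= ?ler01 ?lexx.
  rewrite (bigD1 (ks x)) //= eqxx big1 ?addr0 // => k /negbTE ->. by [].
move=> k; rewrite mixE -/Tq -/(P k); split.
  apply: conv_lt; [exact: srq0 | exact: le_lt_trans srq (lt_k k)].
apply: hit_lt; first exact: qlt1. move=> hk.
have Uq := noeig _ _ _ heig_q qlt1.
have Uk := noeig _ _ _ (heig_k k) hk.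
have srIq : spectral_radius (invmx (1%:M - Tq)) <= (1 - D)^-1.
  apply: (@sr_le _ _ _ (fun i => (1 - Tq i i)^-1) (@tri_inv_eig _ _ _ _ tri_q Uq)) => [i _|].
    have /andP[h1 h2] := dq i; exact: inv_le h1 (Dmax i) D1.
  by rewrite invr_ge0 subr_ge0 ltW.
have [i ei Di] := @sr_gt _ _ _ (fun i => Tsub f (P k) i i) (heig_k k) _ D0 (lt_k k).
have /andP[d0 d1] := dk k i.
move: Di ei; set d := Tsub f (P k) i i => Di ei.
rewrite ger0_norm in Di; last exact: d0.
have dlt1 : d < 1.
  have := @sr_ub _ _ _ (fun i => Tsub f (P k) i i) (heig_k k) _ ei.
  rewrite normcR ger0_norm; last exact: d0.
  move=> h; exact: le_lt_trans h hk.
have ei2 := @inv_eig_map _ _ _ _ Uk ei.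
have := @sr_ub _ _ _ (fun i => (1 - Tsub f (P k) i i)^-1) (@tri_inv_eig _ _ _ _ (tri_k k) Uk) _ ei2.
rewrite normcR ger0_norm; last by rewrite invr_ge0 subr_ge0 ltW.
move=> h; apply: le_lt_trans srIq (lt_le_trans _ h).
exact: inv_lt D0 Di dlt1.
Qed.
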